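(* Let $(\mathbf{L},\mathbf{R})\in\mathcal{P}_{\mathsf N}$ be centered and suppose it admits a dominance map. Then $\mathbf{L}\preceq^{\mathrm{PC}}\mathbf{R}$, i.e. $v\mathbf{L}\preceq v\mathbf{R}$ for every $v\in\mathbb{R}_+^{\mathsf N+1}$.
   Context: $\mathcal{P}_{\mathsf N}$ denotes the set of pairs $(\mathbf{L},\mathbf{R})$ of $(0,1)$-matrices, $\mathbf{L}$ of size $(\mathsf N+1)\times m_L$ and $\mathbf{R}$ of size $(\mathsf N+1)\times m_R$, such that some index $p\in[\mathsf N+1]$ has row $p$ of $\mathbf{L}$ and row $p$ of $\mathbf{R}$ both zero. $\mathbf{A}_{(i)}$ is the $i$-th row; $e$ the all-ones row vector; $|v|=\sum_k|v_k|$; $\le$ between vectors is componentwise. The pair is centered if it is balanced ($|\mathbf{L}_{(i)}|=|\mathbf{R}_{(i)}|$ for all $i$) and some row satisfies $\mathbf{L}_{(i)}=e=\mathbf{R}_{(i)}$ (so $m_L=m_R=m$). A dominance map is $f:\{0,1\}^{m}\to\{0,1\}^{m}$ with $|u|=|f(u)|$ and $\mathbf{L}u^T\le\mathbf{R}f(u)^T$ for all $u$. For $x,y\in\mathbb{R}^d$, $x\preceq y$ (majorization) means $\sum_{n=1}^k x^\downarrow_n\le\sum_{n=1}^k y^\downarrow_n$ for $k=1,\dots,d-1$ and $\sum_{n=1}^d x_n=\sum_{n=1}^d y_n$, where $x^\downarrow_n$ is the $n$-th largest component. $\mathbb{R}_+$ denotes the nonnegative reals, and $v$ is a row vector. *)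

(* Defs.v *)
From HB Require Import structures.
From mathcomp Require Import all_boot all_order all_algebra.
From mathcomp Require Import reals.
Set Implicit Arguments. Unset Strict Implicit. Unset Printing Implicit Defensive.
Import Order.TTheory GRing.Theory Num.Theory.
Local Open Scope ring_scope.

Section Defs.
Variable R : realType.

Definition zero_one_mx (n m : nat) (A : 'M[R]_(n, m)) : Prop :=
  forall i j, A i j = 0 \/ A i j = 1.

Definition l1norm (m : nat) (v : 'rV[R]_m) : R := \sum_(k < m) `|v 0 k|.

Definition ones_row (m : nat) : 'rV[R]_m := const_mx 1.

(* membership in P_N (with m_L = m_R = m) *)
Definition in_PN (N m : nat) (L Rm : 'M[R]_(N.+1, m)) : Prop :=
  [/\ zero_one_mx L, zero_one_mx Rm &
      exists p : 'I_N.+1, row p L = 0 /\ row p Rm = 0].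

Definition balanced (N m : nat) (L Rm : 'M[R]_(N.+1, m)) : Prop :=
  forall i, l1norm (row i L) = l1norm (row i Rm).

Definition centered (N m : nat) (L Rm : 'M[R]_(N.+1, m)) : Prop :=
  balanced L Rm /\ exists i, row i L = ones_row m /\ row i Rm = ones_row m.

Definition bvec (m : nat) (u : {ffun 'I_m -> bool}) : 'rV[R]_m :=
  \row_j (u j)%:R.

Definition le_cV (n : nat) (x y : 'cV[R]_n) : Prop := forall i, x i 0 <= y i 0.

Definition dominance_map (N m : nat) (L Rm : 'M[R]_(N.+1, m))
  (f : {ffun 'I_m -> bool} -> {ffun 'I_m -> bool}) : Prop :=
  forall u, l1norm (bvec u) = l1norm (bvec (f u)) /\
            le_cV (L *m (bvec u)^T) (Rm *m (bvec (f u))^T).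

Definition decr (d : nat) (x : 'rV[R]_d) : seq R :=
  sort (fun a b : R => b <= a) [seq x 0 i | i <- enum 'I_d].

Definition majorized (d : nat) (x y : 'rV[R]_d) : Prop :=
  (forall k, (1 <= k <= d.-1)%N ->
     \sum_(n < k) (decr x)`_n <= \sum_(n < k) (decr y)`_n) /\
  \sum_(n < d) x 0 n = \sum_(n < d) y 0 n.

End Defs.

(* Main.v *)
Require Import Defs.
From HB Require Import structures.
From mathcomp Require Import all_boot all_order all_algebra.
From mathcomp Require Import reals.
Import Order.TTheory GRing.Theory Num.Theory.
Set Implicit Arguments. Unset Strict Implicit.
Local Open Scope ring_scope.

Section Aux.
Variable R : realType.

Lemma prefix_take (s : seq R) k : (k <= size s)%N ->
  \sum_(n < k) s`_n = \sum_(a <- take k s) a.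
Proof.
move=> ks; rewrite (big_nth 0) size_takel // big_mkord.
by apply: eq_bigr => i _; rewrite nth_take.
Qed.

Lemma sum1_seq (T : Type) (s : seq T) : \sum_(i <- s) (1 : R) = (size s)%:R.
Proof. by elim: s => [|a s IH]; rewrite ?big_nil // big_cons IH /= -natr1 addrC. Qed.

Definition ge_rel : rel R := fun a b => b <= a.

Lemma ge_trans : transitive ge_rel.
Proof. by move=> a b c /= h1 h2; apply: le_trans h2 h1. Qed.
Lemma ge_anti : antisymmetric ge_rel.
Proof. by move=> a b /andP[h1 h2]; apply/eqP; rewrite eq_le; apply/andP; split. Qed.
Lemma ge_total : total ge_rel.
Proof. by move=> a b; rewrite /ge_rel le_total. Qed.

Lemma decr_sorted d (x : 'rV[R]_d) : sorted ge_rel (decr x).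
Proof. rewrite /decr; exact: (sort_sorted ge_total). Qed.

Lemma decr_perm d (x : 'rV[R]_d) : perm_eq (decr x) [seq x 0 i | i <- enum 'I_d].
Proof. by rewrite /decr perm_sort. Qed.

Lemma size_decr d (x : 'rV[R]_d) : size (decr x) = d.
Proof. by rewrite /decr size_sort size_map size_enum_ord. Qed.

Lemma top_set d (x : 'rV[R]_d) k : (k <= d)%N ->
  exists u : {ffun 'I_d -> bool}, \sum_j ((u j)%:R : R) = k%:R /\
    \sum_(n < k) (decr x)`_n = \sum_j (u j)%:R * x 0 j.
Proof.
move=> kd.
pose rl : rel 'I_d := fun i j => x 0 j <= x 0 i.
pose idx := sort rl (enum 'I_d).
have Hd : decr x = map (x 0) idx.
  apply: (sorted_eq ge_trans ge_anti).
  - exact: decr_sorted.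
  - rewrite sorted_map; have : sorted rl idx by rewrite /idx; apply: (sort_sorted (leT := rl)) => i j; rewrite /rl le_total.
    by [].
  - by rewrite (perm_trans (decr_perm x)) // perm_map // perm_sym perm_sort.
have Uidx : uniq (take k idx) by rewrite take_uniq // sort_uniq enum_uniq.
have Sidx : size (take k idx) = k by rewrite size_takel // size_sort size_enum_ord.
exists [ffun j => j \in take k idx]; split.
  rewrite (eq_bigr (fun j => if j \in take k idx then 1 else 0)); last first.
    by move=> j _; rewrite ffunE; case: (_ \in _).
  rewrite -big_mkcond -(big_uniq _ Uidx) /=.
  by rewrite sum1_seq Sidx.
rewrite prefix_take ?size_decr // Hd -map_take big_map big_uniq //=.
by rewrite big_mkcond /=; apply: eq_bigr => j _; rewrite ffunE; case: (_ \in _); rewrite ?mul1r ?mul0r.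
Qed.

Lemma bound d (y : 'rV[R]_d) k (u : {ffun 'I_d -> bool}) : (0 < k <= d)%N ->
  \sum_j ((u j)%:R : R) = k%:R ->
  \sum_j (u j)%:R * y 0 j <= \sum_(n < k) (decr y)`_n.
Proof.
case/andP=> k0 kd Hu.
set s := decr y; set c := s`_k.-1.
pose pos (a : R) := Num.max a 0.
have step : \sum_j (u j)%:R * y 0 j <= \sum_j ((u j)%:R * c + pos (y 0 j - c)).
  apply: ler_sum => j _; case: (u j); rewrite ?mul1r ?mul0r ?add0r.
    by rewrite -lerBlDl /pos le_max lexx.
  by rewrite /pos le_max lexx orbT.
apply: (le_trans step); rewrite big_split /= -big_distrl /= Hu.
have -> : \sum_j pos (y 0 j - c) = \sum_(a <- s) pos (a - c).
  by rewrite (perm_big _ (decr_perm y)) big_map big_enum.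
rewrite (big_nth 0) size_decr (@big_cat_nat _ _ _ k 0 d) // /=.
have Hs : sorted ge_rel s by exact: decr_sorted.
have cmp : forall i j, (i <= j < d)%N -> s`_j <= s`_i.
  move=> i j /andP[ij jd].
  apply: (sorted_leq_nth ge_trans _ 0 Hs) => //.
  - by move=> a; rewrite /ge_rel lexx.
  - by rewrite inE size_decr (leq_ltn_trans ij jd).
  - by rewrite inE size_decr.
rewrite (eq_big_nat _ _ (F2 := fun n => s`_n - c)); last first.
  move=> i /andP[_ ik]; rewrite /pos; apply/max_idPl.
  rewrite subr_ge0 /c; apply: cmp.
  by rewrite -ltnS prednK // ik (leq_trans _ kd) // ltn_predL.
rewrite [\sum_(k <= i < d) _](eq_big_nat _ _ (F2 := fun n => 0)); last first.
  move=> i /andP[ki id]; rewrite /pos; apply/max_idPr.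
  rewrite subr_le0 /c; apply: cmp.
  by rewrite id andbT (leq_trans _ ki) // leq_pred.
rewrite big1_eq addr0 sumrB sumr_const_nat subn0 big_mkord -mulr_natl.
by rewrite addrC mulr1 mulr_natl subrK.
Qed.
Lemma l1_bvec d (w : {ffun 'I_d -> bool}) : l1norm (@bvec R d w) = \sum_j ((w j)%:R : R).
Proof. by apply: eq_bigr => j _; rewrite mxE normr_nat. Qed.

Lemma quad n d (v : 'rV[R]_n) (A : 'M[R]_(n, d)) (w : {ffun 'I_d -> bool}) :
  \sum_j (w j)%:R * (v *m A) 0 j = \sum_i v 0 i * (A *m (@bvec R d w)^T) i 0.
Proof.
rewrite (eq_bigr (fun j => \sum_i (w j)%:R * (v 0 i * A i j))); last first.
  by move=> j _; rewrite mxE big_distrr.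
rewrite exchange_big /=; apply: eq_bigr => i _; rewrite mxE big_distrr /=.
by apply: eq_bigr => j _; rewrite !mxE mulrCA (mulrC (w j)%:R).
Qed.

Lemma rowsum n d (v : 'rV[R]_n) (A : 'M[R]_(n, d)) :
  \sum_j (v *m A) 0 j = \sum_i v 0 i * \sum_j A i j.
Proof.
rewrite (eq_bigr (fun j => \sum_i v 0 i * A i j)); last by move=> j _; rewrite mxE.
by rewrite exchange_big /=; apply: eq_bigr => i _; rewrite big_distrr.
Qed.

Lemma l1_row01 n d (A : 'M[R]_(n, d)) i : zero_one_mx A ->
  l1norm (row i A) = \sum_j A i j.
Proof.
move=> z; apply: eq_bigr => j _; rewrite mxE.
by case: (z i j) => ->; rewrite ?normr0 ?normr1.
Qed.

End Aux.

Theorem theorem3 (R : realType) (N m : nat) (L Rm : 'M[R]_(N.+1, m)) :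
  in_PN L Rm -> centered L Rm ->
  (exists f, dominance_map L Rm f) ->
  forall v : 'rV[R]_(N.+1), (forall i, 0 <= v 0 i) ->
    majorized (v *m L) (v *m Rm).
Proof.
case=> zL zR _ [bal _] [f Hf] v v0; split; last first.
  rewrite !rowsum; apply: eq_bigr => i _.
  by rewrite -(l1_row01 i zL) -(l1_row01 i zR) bal.
move=> k /andP[k1 km].
have km' : (k <= m)%N by apply: leq_trans km (leq_pred m).
have [u [Hu Hx]] := top_set (v *m L) km'.
rewrite Hx; have [Hn Hle] := Hf u.
have Hfu : \sum_j ((f u j)%:R : R) = k%:R by rewrite -l1_bvec -Hn l1_bvec.
apply: le_trans (bound (v *m Rm) _ Hfu); last by rewrite k1.
rewrite !quad; apply: ler_sum => i _; apply: ler_wpM2l; [exact: v0 | exact: Hle].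
Qed.
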